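(* Let $p\in[1,+\infty]$ and let $X^1,\dots,X^N$ be mm-spaces. Then for every $\kappa_1\in(0,1)$ and $\kappa_2,\dots,\kappa_N\in(0,1/2)$, $$\mathrm{OD}\Big(\big(\textstyle\prod_{i=1}^N X^i\big)_p;-\sum_{i=1}^N\kappa_i\Big)\le\mathrm{OD}(X^1;-\kappa_1)+2\sum_{i=2}^N\mathrm{OD}(X^i;-\kappa_i).$$
   Context: An mm-space is a triple $(X,d_X,m_X)$ with $(X,d_X)$ complete separable metric space and $m_X$ a Borel probability measure. $(\prod_{i=1}^NX^i)_p$ is the mm-space $(\prod X^i, d, \bigotimes m_{X^i})$ with $d((x_i),(x'_i))=(\sum_i d_{X^i}(x_i,x'_i)^p)^{1/p}$ if $p<\infty$ and $\max_i d_{X^i}(x_i,x'_i)$ if $p=\infty$. Partial diameter: $\mathrm{PD}(X;\alpha)$ = infimum of $\operatorname{diam}A$ over Borel $A$ with $m_X(A)\ge\alpha$. Observable diameter: $\mathrm{OD}(X;-\kappa):=\sup_f\mathrm{PD}((\mathbb R,|\cdot|,f_*m_X);1-\kappa)$ over 1-Lipschitz $f\colon X\to\mathbb R$. *)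

(* Defs.v *)
From HB Require Import structures.
From mathcomp Require Import all_boot all_order all_algebra.
From mathcomp Require Import all_classical all_reals all_analysis.
Set Implicit Arguments. Unset Strict Implicit. Unset Printing Implicit Defensive.
Import Order.TTheory GRing.Theory Num.Theory.
Import numFieldNormedType.Exports.
Local Open Scope classical_set_scope.
Local Open Scope ring_scope.

Section MM.
Variable R : realType.

Definition is_metric (T : Type) (d : T -> T -> R) : Prop :=
  [/\ forall x y, 0 <= d x y,
      forall x y, d x y = 0 <-> x = y,
      forall x y, d x y = d y x &
      forall x y z, d x z <= d x y + d y z].

Definition d_complete (T : Type) (d : T -> T -> R) : Prop :=
  forall u : nat -> T,
    (forall e, 0 < e -> exists N, forall m n, (N <= m)%N -> (N <= n)%N -> d (u m) (u n) < e) ->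
    exists l, forall e, 0 < e -> exists N, forall n, (N <= n)%N -> d (u n) l < e.

(** separable: existence of a countable dense subset (an mm-space is nonempty,
    so a countable dense set can be enumerated by a sequence). *)
Definition d_separable (T : Type) (d : T -> T -> R) : Prop :=
  exists D : nat -> T, forall x e, 0 < e -> exists k, d x (D k) < e.

Definition d_open (T : Type) (d : T -> T -> R) : set (set T) :=
  [set U | forall x, U x -> exists2 r, 0 < r & [set y | d x y < r] `<=` U].

Definition d_borel (T : Type) (d : T -> T -> R) : set (set T) :=
  <<s d_open d >>.

(** m is a Borel probability measure (its values outside Borel sets are irrelevant) *)
Definition is_borel_probability (T : Type) (d : T -> T -> R) (m : set T -> \bar R) : Prop :=
  [/\ m set0 = 0%E, m setT = 1%E,
      forall A, d_borel d A -> (0 <= m A)%E &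
      forall F : nat -> set T, (forall k, d_borel d (F k)) -> trivIset setT F ->
        (fun n => \sum_(k < n) m (F k))%E @ \oo --> m (\bigcup_k F k)].

Record mmspace := MMSpace {
  mm_T : Type;
  mm_d : mm_T -> mm_T -> R;
  mm_m : set mm_T -> \bar R;
  mm_metric : is_metric mm_d;
  mm_complete : d_complete mm_d;
  mm_separable : d_separable mm_d;
  mm_prob : is_borel_probability mm_d mm_m }.

(** diameter, with the convention diam set0 = 0 *)
Definition diam (T : Type) (d : T -> T -> R) (A : set T) : \bar R :=
  ereal_sup ([set (d x y)%:E | x in A & y in A] `|` [set 0%E]).

Definition PD (T : Type) (d : T -> T -> R) (m : set T -> \bar R) (alpha : R) : \bar R :=
  ereal_inf [set diam d A | A in [set A | d_borel d A /\ (alpha%:E <= m A)%E]].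

Definition dist_R (a b : R) : R := `|a - b|.

Definition lip1 (T : Type) (d : T -> T -> R) (f : T -> R) : Prop :=
  forall x y, `|f x - f y| <= d x y.

Definition OD (T : Type) (d : T -> T -> R) (m : set T -> \bar R) (kappa : R) : \bar R :=
  ereal_sup [set PD dist_R (fun B => m (f @^-1` B)) (1 - kappa) | f in [set f | lip1 d f]].

Definition mmOD (X : mmspace) (kappa : R) : \bar R := OD (@mm_d X) (@mm_m X) kappa.

Definition dprod (n : nat) (T : 'I_n -> Type) (d : forall i, T i -> T i -> R)
    (p : \bar R) (x y : forall i, T i) : R :=
  match p with
  | r%:E => (\sum_(i < n) (d i (x i) (y i)) `^ r) `^ r^-1
  | _ => \big[Order.max/0]_(i < n) d i (x i) (y i)
  end.

(** mu is the product measure of the m_i on the product Borel sets: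
    a Borel probability measure for the product metric that is multiplicative
    on measurable rectangles (this determines it uniquely) *)
Definition is_product_measure (n : nat) (X : 'I_n -> mmspace) (p : \bar R)
    (mu : set (forall i, mm_T (X i)) -> \bar R) : Prop :=
  is_borel_probability (dprod (fun i => @mm_d (X i)) p) mu /\
  forall A : forall i, set (mm_T (X i)), (forall i, d_borel (@mm_d (X i)) (A i)) ->
    mu [set x | forall i, A i (x i)] = (\prod_(i < n) @mm_m (X i) (A i))%E.

End MM.

(* Main.v *)
Require Import Defs.
From HB Require Import structures.
From mathcomp Require Import all_boot all_order all_algebra.
From mathcomp Require Import all_classical all_reals all_analysis.
From mathcomp Require Import lra ring.
Import Order.TTheory GRing.Theory Num.Theory.
Local Open Scope classical_set_scope.
Local Open Scope ring_scope.
Set Implicit Arguments. Unset Strict Implicit. Unset Printing Implicit Defensive.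

Section Gen.
Variables (R : realType) (T : Type) (d : T -> T -> R).

Lemma borel_open A : d_open d A -> d_borel d A.
Proof. exact: sub_sigma_algebra. Qed.
Lemma borel0 : d_borel d set0.
Proof. exact: sigma_algebra0. Qed.
Lemma borelCD A : d_borel d A -> d_borel d (setT `\` A).
Proof. exact: sigma_algebraCD. Qed.
Lemma borelC A : d_borel d A -> d_borel d (~` A).
Proof. by move=> h; rewrite -setTD; exact: borelCD. Qed.
Lemma borelT : d_borel d setT.
Proof. by rewrite -setC0; apply: borelC; exact: borel0. Qed.
Lemma borel_bigcup (F : nat -> set T) : (forall k, d_borel d (F k)) -> d_borel d (\bigcup_k F k).
Proof. exact: sigma_algebra_bigcup. Qed.
Lemma borelU A B : d_borel d A -> d_borel d B -> d_borel d (A `|` B).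
Proof.
move=> hA hB; rewrite -bigcup2E; apply: borel_bigcup => -[|[|k]] //=; exact: borel0.
Qed.
Lemma borelI A B : d_borel d A -> d_borel d B -> d_borel d (A `&` B).
Proof.
move=> hA hB; rewrite -[A `&` B]setCK setCI; apply: borelC; apply: borelU; exact: borelC.
Qed.
Lemma borelD A B : d_borel d A -> d_borel d B -> d_borel d (A `\` B).
Proof. by move=> hA hB; apply: borelI => //; exact: borelC. Qed.

Lemma borel_preimage (U : Type) (e : U -> U -> R) (h : T -> U) (C : R) :
  0 < C -> (forall x y, e (h x) (h y) <= C * d x y) ->
  forall B, d_borel e B -> d_borel d (h @^-1` B).
Proof.
move=> C0 hL B hB.
pose X := [set B : set U | d_borel d (h @^-1` B)].
suff : d_borel e `<=` X by apply.
apply: smallest_sub.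
  split.
  - by rewrite /X /= preimage_set0; exact: borel0.
  - by move=> A; rewrite /X /= !setTD -preimage_setC; exact: borelC.
  - by move=> F hF; rewrite /X /= preimage_bigcup; exact: borel_bigcup.
move=> V hV; rewrite /X /=; apply: borel_open => x /= Vx.
have [r r0 sub] := hV _ Vx.
exists (r / C); first by rewrite divr_gt0.
move=> y /= dxy; apply: sub => /=.
rewrite (le_lt_trans (hL x y)) //.
by rewrite -ltr_pdivlMl // mulrC.
Qed.
End Gen.


Section MeasInst.
Variables (R : realType) (T : pointedType) (d : T -> T -> R) (m : set T -> \bar R).
Hypothesis Hm : is_borel_probability d m.

Definition BT := g_sigma_algebraType (d_open d).
Definition mm (A : set BT) : \bar R := if pselect (d_borel d A) then m A else 0%E.

Let mm0 : mm set0 = 0%E.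
Proof. rewrite /mm; case: pselect => //; by case: Hm. Qed.
Let mm_ge0 A : (0 <= mm A)%E.
Proof. rewrite /mm; case: pselect => // H; by case: Hm => _ _ + _; apply. Qed.
Let mmE A : d_borel d A -> mm A = m A.
Proof. by rewrite /mm; case: pselect. Qed.
Let mm_ssa : semi_sigma_additive mm.
Proof.
move=> F mF tF mU.
rewrite mmE //.
have -> : (fun n => \sum_(0 <= i < n) mm (F i))%E = (fun n => \sum_(k < n) m (F k))%E.
  apply: boolp.funext => k; rewrite big_mkord; apply: eq_bigr => i _; apply: mmE; exact: mF.
by case: Hm => _ _ _; apply.
Qed.
HB.instance Definition _ := isMeasure.Build _ BT R mm mm0 mm_ge0 mm_ssa.

Lemma pm_ge0 A : d_borel d A -> (0 <= m A)%E.
Proof. by move=> hA; rewrite -mmE. Qed.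
Lemma pm_le A B : d_borel d A -> d_borel d B -> A `<=` B -> (m A <= m B)%E.
Proof. move=> hA hB AB; rewrite -!mmE //; apply: (le_measure mm) => //; rewrite inE. exact: hA. exact: hB. Qed.
Lemma pm_T : m setT = 1%E.
Proof. by case: Hm. Qed.
Lemma pm_le1 A : d_borel d A -> (m A <= 1)%E.
Proof. move=> hA; rewrite -pm_T; apply: pm_le => //; exact: borelT. Qed.
Lemma pm_U A B : d_borel d A -> d_borel d B -> A `&` B = set0 ->
  m (A `|` B) = (m A + m B)%E.
Proof.
move=> hA hB AB; rewrite -!mmE //; last exact: borelU.
exact: (measureU mm).
Qed.
Lemma pm_compl A B (k : R) : d_borel d A -> d_borel d B -> A `&` B = set0 ->
  ((1 - k)%:E <= m A)%E -> (m B <= k%:E)%E.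
Proof.
move=> hA hB AB hk.
have := pm_le1 (borelU hA hB); rewrite pm_U // => h1.
have hA0 := pm_ge0 hA; have hB0 := pm_ge0 hB.
move: (pm_le1 hA) (pm_le1 hB) => hA1 hB1.
move: hA0 hA1 hk h1; case: (m A) => [a| |] //= ha0 ha1 hk.
move: hB0 hB1; case: (m B) => [b| |] //= hb0 hb1.
rewrite !lee_fin in ha0 ha1 hk hb0 hb1 *; move=> h; have h2 : a + b <= 1 by rewrite -lee_fin. lra.
Qed.
Lemma pm_U2 A B : d_borel d A -> d_borel d B -> (m (A `|` B) <= m A + m B)%E.
Proof.
move=> hA hB; rewrite -!mmE //; last exact: borelU.
exact: (measureU2 mm).
Qed.
Lemma pm_sub_sigma A (F : nat -> set T) : d_borel d A -> (forall k, d_borel d (F k)) ->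
  A `<=` \bigcup_k F k -> (m A <= \sum_(k <oo) m (F k))%E.
Proof.
move=> hA hF AF; rewrite -mmE //.
rewrite (@eq_eseriesr _ (fun k => m (F k)) (fun k => mm (F k))); last first.
  by move=> k _; rewrite mmE.
exact: (measure_sigma_subadditive mm).
Qed.
Lemma pm_bigcup (F : nat -> set T) : (forall k, d_borel d (F k)) -> trivIset setT F ->
  (\sum_(k <oo) m (F k))%E = m (\bigcup_k F k).
Proof.
move=> hF tF; rewrite -mmE; last exact: borel_bigcup.
rewrite (@eq_eseriesr _ (fun k => m (F k)) (fun k => mm (F k))); last first.
  by move=> k _; rewrite mmE.
by rewrite (measure_semi_bigcup mm) //; exact: borel_bigcup.
Qed.
Lemma pm_boole N (F : nat -> set T) : (forall k, d_borel d (F k)) ->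
  (m (\big[setU/set0]_(i < N) F i) <= \sum_(i < N) m (F i))%E.
Proof.
move=> hF; rewrite -mmE; last first.
  by elim: N => [|N ih]; [rewrite big_ord0; exact: borel0 | rewrite big_ord_recr; exact: borelU].
have -> : (\sum_(i < N) m (F i) = \sum_(i < N) mm (F i))%E.
  by apply: eq_bigr => i _; rewrite mmE.
by apply: (Boole_inequality mm) => i _; exact: hF.
Qed.
End MeasInst.

Section Wrap.
Variables (R : realType) (T : Type) (t0 : T) (d : T -> T -> R) (m : set T -> \bar R).
Hypothesis Hm : is_borel_probability d m.
Let PT : pointedType := HB.pack T (gen_eqMixin T) (gen_choiceMixin T) (isPointed.Build T t0).

Lemma qm_ge0 A : d_borel d A -> (0 <= m A)%E.
Proof. exact: (@pm_ge0 R PT d m Hm). Qed.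
Lemma qm_le A B : d_borel d A -> d_borel d B -> A `<=` B -> (m A <= m B)%E.
Proof. exact: (@pm_le R PT d m Hm). Qed.
Lemma qm_T : m setT = 1%E.
Proof. exact: (@pm_T R PT d m Hm). Qed.
Lemma qm_le1 A : d_borel d A -> (m A <= 1)%E.
Proof. exact: (@pm_le1 R PT d m Hm). Qed.
Lemma qm_compl A B (k : R) : d_borel d A -> d_borel d B -> A `&` B = set0 ->
  ((1 - k)%:E <= m A)%E -> (m B <= k%:E)%E.
Proof. exact: (@pm_compl R PT d m Hm). Qed.
Lemma qm_U2 A B : d_borel d A -> d_borel d B -> (m (A `|` B) <= m A + m B)%E.
Proof. exact: (@pm_U2 R PT d m Hm). Qed.
Lemma qm_sub_sigma A (F : nat -> set T) : d_borel d A -> (forall k, d_borel d (F k)) ->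
  A `<=` \bigcup_k F k -> (m A <= \sum_(k <oo) m (F k))%E.
Proof. exact: (@pm_sub_sigma R PT d m Hm). Qed.
Lemma qm_bigcup (F : nat -> set T) : (forall k, d_borel d (F k)) -> trivIset setT F ->
  (\sum_(k <oo) m (F k))%E = m (\bigcup_k F k).
Proof. exact: (@pm_bigcup R PT d m Hm). Qed.
Lemma qm_boole N (F : nat -> set T) : (forall k, d_borel d (F k)) ->
  (m (\big[setU/set0]_(i < N) F i) <= \sum_(i < N) m (F i))%E.
Proof. exact: (@pm_boole R PT d m Hm). Qed.
End Wrap.


Section MM.
Variables (R : realType) (Y : mmspace R).
Notation T := (mm_T Y).
Notation d := (@mm_d R Y).
Notation m := (@mm_m R Y).

Definition mD : nat -> T := projT1 (cid (mm_separable Y)).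
Lemma mDP x e : 0 < e -> exists k, d x (mD k) < e.
Proof. exact: (projT2 (cid (mm_separable Y))). Qed.
Definition mpt : T := mD 0.

Lemma md_ge0 x y : 0 <= d x y. Proof. by case: (mm_metric Y). Qed.
Lemma md_xx x : d x x = 0. Proof. by case: (mm_metric Y) => _ h _ _; apply/h. Qed.
Lemma md_sym x y : d x y = d y x. Proof. by case: (mm_metric Y). Qed.
Lemma md_tri x y z : d x z <= d x y + d y z. Proof. by case: (mm_metric Y). Qed.

Let Hm := mm_prob Y.
Lemma m_ge0 A : d_borel d A -> (0 <= m A)%E. Proof. exact: (qm_ge0 mpt Hm). Qed.
Lemma m_le A B : d_borel d A -> d_borel d B -> A `<=` B -> (m A <= m B)%E.
Proof. exact: (qm_le mpt Hm). Qed.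
Lemma m_T : m setT = 1%E. Proof. exact: (qm_T mpt Hm). Qed.
Lemma m_le1 A : d_borel d A -> (m A <= 1)%E. Proof. exact: (qm_le1 mpt Hm). Qed.
Lemma m_compl A B (k : R) : d_borel d A -> d_borel d B -> A `&` B = set0 ->
  ((1 - k)%:E <= m A)%E -> (m B <= k%:E)%E.
Proof. exact: (qm_compl mpt Hm). Qed.

Lemma ball_open c r : d_open d [set t | d t c < r].
Proof.
move=> t /= htc; exists (r - d t c); first by rewrite subr_gt0.
move=> y /= hy; rewrite (le_lt_trans (md_tri y t c)) // md_sym; lra.
Qed.

Lemma lip1_borel (h : T -> R) B : lip1 d h -> d_borel (@dist_R R) B -> d_borel d (h @^-1` B).
Proof.
move=> hl; apply: (@borel_preimage _ _ _ _ _ _ 1) => //.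
by move=> x y; rewrite mul1r; exact: hl.
Qed.

End MM.

Section RealOpen.
Variable R : realType.
Lemma openR_lt (v : R) : d_borel (@dist_R R) [set s | s < v].
Proof.
apply: borel_open => s /= hs; exists (v - s); first by rewrite subr_gt0.
move=> y /=; rewrite /dist_R distrC => hy; have := ler_norm (y - s); lra.
Qed.
Lemma openR_far (c a : R) : d_borel (@dist_R R) [set s | c < `|s - a|].
Proof.
apply: borel_open => s /= hs; exists (`|s - a| - c); first by rewrite subr_gt0.
move=> y /=; rewrite /dist_R => hy.
have := ler_distD y s a; lra.
Qed.
Lemma openR_nbhd (B : set R) (r : R) : d_borel (@dist_R R) [set s | exists2 u, B u & `|s - u| < r].
Proof.
apply: borel_open => s /= [u Bu hs]; exists (r - `|s - u|); first by rewrite subr_gt0.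
move=> y /=; rewrite /dist_R => hy; exists u => //.
have := ler_distD s y u; rewrite (distrC y s); lra.
Qed.
End RealOpen.


Section MM2.
Variables (R : realType) (Y : mmspace R).
Notation T := (mm_T Y).
Notation d := (@mm_d R Y).
Notation m := (@mm_m R Y).

Lemma od_set (k b e : R) (h : T -> R) : lip1 d h -> (OD d m k <= b%:E)%E -> 0 < e ->
  exists B, [/\ d_borel (@dist_R R) B, ((1 - k)%:E <= m (h @^-1` B))%E &
    forall u v, B u -> B v -> `|u - v| < b + e].
Proof.
move=> hl hOD e0.
have hPD : (PD (@dist_R R) (fun B => m (h @^-1` B)) (1 - k) <= b%:E)%E.
  by apply: le_trans hOD; apply: ereal_sup_ubound; exists h.
have : (PD (@dist_R R) (fun B => m (h @^-1` B)) (1 - k) < (b + e)%:E)%E.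
  by apply: (le_lt_trans hPD); rewrite lte_fin; lra.
move/ereal_inf_lt => [y [A [hA hmA] <-] hlt].
exists A; split => // u v Au Av.
have : ((@dist_R R u v)%:E <= diam (@dist_R R) A)%E.
  by apply: ereal_sup_ubound; left; exists u => //; exists v.
move=> h1; have := le_lt_trans h1 hlt; rewrite lte_fin /dist_R //.
Qed.
End MM2.

Section Med.
Variables (R : realType) (Y : mmspace R).
Notation T := (mm_T Y).
Notation d := (@mm_d R Y).
Notation m := (@mm_m R Y).

Definition Sset (h : T -> R) := [set v : R | (m [set t | (h t < v)%R] <= (2^-1)%:E)%E].
Definition med h := sup (Sset h).

Lemma med_good (k D : R) h B u : k < 2^-1 -> lip1 d h -> d_borel (@dist_R R) B ->
  ((1 - k)%:E <= m (h @^-1` B))%E -> (forall u v, B u -> B v -> `|u - v| <= D) -> B u ->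
  Sset h (u - D) /\ (forall v, Sset h v -> v <= u + D).
Proof.
move=> hk hl hB hmB hD Bu; split.
  rewrite /Sset /=; apply: (@le_trans _ _ k%:E); last by rewrite lee_fin; lra.
  apply: (m_compl (lip1_borel hl hB) (lip1_borel hl (openR_lt _))) => //.
  apply/seteqP; split => t //= [Bt ht].
  have := hD _ _ Bt Bu; have := ler_norm (u - h t); rewrite distrC; lra.
move=> v Sv; rewrite leNgt; apply/negP => hv.
have : (m (h @^-1` B) <= m [set t | (h t < v)%R])%E.
  apply: m_le; [exact: lip1_borel hl hB|exact: lip1_borel hl (openR_lt _)|].
  move=> t /= Bt; have := hD _ _ Bt Bu; have := ler_norm (h t - u); lra.
move=> h1; have := le_trans hmB (le_trans h1 Sv); rewrite lee_fin; lra.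
Qed.

Lemma med_near (k D : R) h B u : k < 2^-1 -> lip1 d h -> d_borel (@dist_R R) B ->
  ((1 - k)%:E <= m (h @^-1` B))%E -> (forall u v, B u -> B v -> `|u - v| <= D) -> B u ->
  `|u - med h| <= D.
Proof.
move=> hk hl hB hmB hD Bu.
have [h1 h2] := med_good hk hl hB hmB hD Bu.
have hs : has_sup (Sset h) by split; [exists (u - D)|exists (u + D) => v /h2].
have := sup_upper_bound hs h1; have : med h <= u + D by apply: ge_sup => //; exists (u - D).
rewrite /med => a b; rewrite ler_norml; apply/andP; split; lra.
Qed.

Lemma med_nonempty k b (h : T -> R) : k < 2^-1 -> lip1 d h -> (OD d m k <= b%:E)%E ->
  Sset h !=set0 /\ has_ubound (Sset h).
Proof.
move=> hk hl hOD.
have [B [hB hmB hBd]] := od_set hl hOD (@ltr01 R).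
case: (pselect (exists u, B u)) => [[u Bu]|nB].
  have hD : forall u v, B u -> B v -> `|u - v| <= b + 1.
    by move=> ? ? ? ?; apply/ltW/hBd.
  have [h1 h2] := med_good hk hl hB hmB hD Bu.
  by split; [exists (u - (b + 1))|exists (u + (b + 1)) => v /h2].
have : h @^-1` B = set0.
  by apply/seteqP; split => t //= Bt; apply: nB; exists (h t).
move=> e; rewrite e in hmB; case: (mm_prob Y) => h0 _ _ _.
by move: hmB; rewrite h0 lee_fin; lra.
Qed.

Lemma med_lip (h h' : T -> R) (dl : R) : lip1 d h -> lip1 d h' ->
  (forall t, `|h t - h' t| <= dl) -> Sset h !=set0 -> has_ubound (Sset h') ->
  med h <= med h' + dl.
Proof.
move=> hl hl' hd [v0 Sv0] hub.
have key : forall v, Sset h v -> Sset h' (v - dl).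
  move=> v Sv; rewrite /Sset /=; apply: le_trans Sv.
  apply: m_le; [exact: lip1_borel hl' (openR_lt _)|exact: lip1_borel hl (openR_lt _)|].
  move=> t /= ht; have := hd t; have := ler_norm (h t - h' t); lra.
have hs : has_sup (Sset h') by split => //; exists (v0 - dl); exact: key.
apply: ge_sup; first by exists v0.
move=> v Sv; have := sup_upper_bound hs (key _ Sv); rewrite /med; lra.
Qed.

Lemma med_far (k b e : R) (h : T -> R) : k < 2^-1 -> lip1 d h -> (OD d m k <= b%:E)%E -> 0 < e ->
  (m [set t | (b + e < `|h t - med h|)%R] <= k%:E)%E.
Proof.
move=> hk hl hOD e0.
have [B [hB hmB hBd]] := od_set hl hOD e0.
have hD : forall u v, B u -> B v -> `|u - v| <= b + e by move=> ? ? ? ?; apply/ltW/hBd.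
apply: (m_compl (lip1_borel hl hB) (lip1_borel hl (openR_far _ _))) => //.
apply/seteqP; split => t //= [Bt ht].
have := med_near hk hl hB hmB hD Bt; lra.
Qed.
End Med.


Section BigMax.
Variables (R : realType) (I : eqType).
Lemma bigmax_ge (s : seq I) (F : I -> R) i : i \in s -> F i <= \big[Order.max/0]_(j <- s) F j.
Proof.
elim: s => [//|a s ih]; rewrite in_cons big_cons => /orP[/eqP ->|/ih h].
  by rewrite le_max lexx.
by rewrite le_max h orbT.
Qed.
Lemma bigmax_le (s : seq I) (F : I -> R) a : 0 <= a -> (forall j, F j <= a) ->
  \big[Order.max/0]_(j <- s) F j <= a.
Proof.
move=> a0 hF; elim: s => [|b s ih]; first by rewrite big_nil.
by rewrite big_cons ge_max hF ih.
Qed.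
End BigMax.

Section Prod.
Variables (R : realType) (n : nat) (X : 'I_n.+1 -> mmspace R) (p : \bar R).
Hypothesis hp : (1 <= p)%E.
Notation Pi := (forall i, mm_T (X i)).
Notation dp := (dprod (fun i => @mm_d R (X i)) p).

Lemma dprod_ge (x y : Pi) i : mm_d (x i) (y i) <= dp x y.
Proof.
rewrite /dprod; case: p hp => [r| |] // hr.
  rewrite lee_fin in hr.
  have r0 : r != 0 by apply/eqP => r0; rewrite r0 in hr; lra.
  rewrite -{1}(@powRr1 _ (mm_d (x i) (y i))); last exact: md_ge0.
  rewrite -(mulfV r0) powRrM.
  apply: ge0_ler_powR; rewrite ?nnegrE ?invr_ge0 ?powR_ge0 ?sumr_ge0 //; first lra.
    by move=> j _; exact: powR_ge0.
  rewrite (bigD1 i) //= lerDl sumr_ge0 // => j _; exact: powR_ge0.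
exact: (bigmax_ge (fun j => mm_d (x j) (y j)) (mem_index_enum i)).
Qed.

Lemma dprod_single (x y : Pi) i : (forall j, j != i -> x j = y j) ->
  dp x y <= mm_d (x i) (y i).
Proof.
move=> hxy; rewrite /dprod; case: p hp => [r| |] // hr.
  rewrite lee_fin in hr.
  have r0 : r != 0 by apply/eqP => r0; rewrite r0 in hr; lra.
  rewrite (bigD1 i) //= big1 ?addr0.
    rewrite -powRrM mulfV // powRr1 //; exact: md_ge0.
  by move=> j hj; rewrite hxy // md_xx powR0.
apply: bigmax_le; first exact: md_ge0.
move=> j; case: (eqVneq j i) => [->//|hj].
by rewrite hxy // md_xx; exact: md_ge0.
Qed.

Definition lipc (g : Pi -> R) := forall i (x y : Pi), (forall j, j != i -> x j = y j) ->
  `|g x - g y| <= mm_d (x i) (y i).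

Lemma lip1_lipc f : lip1 dp f -> lipc f.
Proof. by move=> hf i x y hxy; apply: le_trans (hf x y) _; exact: dprod_single. Qed.

Lemma lipc_sum g (x y : Pi) : lipc g -> `|g x - g y| <= \sum_(i < n.+1) mm_d (x i) (y i).
Proof.
move=> hg.
pose w (m : nat) : Pi := fun j => if (j < m)%N then x j else y j.
have wx : w n.+1 = x by apply: functional_extensionality_dep => j; rewrite /w ltn_ord.
have wy : w 0%N = y by apply: functional_extensionality_dep => j; rewrite /w.
rewrite -{1}wx -{1}wy -(@telescope_sumr _ 0 n.+1 (fun k => g (w k))) // big_mkord.
apply: le_trans (ler_norm_sum _ _ _) _; apply: ler_sum => i _.
have := hg i (w i.+1) (w i); rewrite /w ltnSn ltnn; apply => j hj.
by rewrite ltnS leq_eqVlt -[j == i :> nat]/(j == i) (negbTE hj).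
Qed.

Lemma lipc_dp g (x y : Pi) : lipc g -> `|g x - g y| <= n.+1%:R * dp x y.
Proof.
move=> hg; apply: le_trans (lipc_sum x y hg) _.
have -> : n.+1%:R * dp x y = \sum_(i < n.+1) dp x y by rewrite sumr_const card_ord mulr_natl.
apply: ler_sum => i _; exact: dprod_ge.
Qed.
End Prod.


Lemma borel_bigI (R : realType) (T : Type) (d : T -> T -> R) (I : eqType) (s : seq I)
  (S : I -> set T) : (forall i, d_borel d (S i)) -> d_borel d [set x | forall i, i \in s -> S i x].
Proof.
move=> hS; elim: s => [|a s ih].
  rewrite (_ : [set x | _] = setT); first exact: borelT.
  by apply/seteqP; split => x //= _ i.
rewrite (_ : [set x | _] = S a `&` [set x | forall i, i \in s -> S i x]).
  exact: borelI.
apply/seteqP; split => x /=.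
  by move=> h; split; [apply: h; rewrite mem_head|move=> i hi; apply: h; rewrite in_cons hi orbT].
by move=> [h1 h2] i; rewrite in_cons => /orP[/eqP ->|/h2].
Qed.

Section ProdM.
Variables (R : realType) (n : nat) (X : 'I_n.+1 -> mmspace R) (p : \bar R)
  (mu : set (forall i, mm_T (X i)) -> \bar R).
Hypothesis hp : (1 <= p)%E.
Hypothesis hmu : @is_product_measure R n.+1 X p mu.
Notation Pi := (forall i, mm_T (X i)).
Notation dp := (dprod (fun i => @mm_d R (X i)) p).

Definition base : Pi := fun i => mpt (X i).
Let Hmu : is_borel_probability dp mu := hmu.1.

Lemma mu_ge0 A : d_borel dp A -> (0 <= mu A)%E. Proof. exact: (qm_ge0 base Hmu). Qed.
Lemma mu_le A B : d_borel dp A -> d_borel dp B -> A `<=` B -> (mu A <= mu B)%E.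
Proof. exact: (qm_le base Hmu). Qed.
Lemma mu_le1 A : d_borel dp A -> (mu A <= 1)%E. Proof. exact: (qm_le1 base Hmu). Qed.
Lemma mu_T : mu setT = 1%E. Proof. exact: (qm_T base Hmu). Qed.
Lemma mu_U2 A B : d_borel dp A -> d_borel dp B -> (mu (A `|` B) <= mu A + mu B)%E.
Proof. exact: (qm_U2 base Hmu). Qed.
Lemma mu_sub_sigma A (F : nat -> set Pi) : d_borel dp A -> (forall k, d_borel dp (F k)) ->
  A `<=` \bigcup_k F k -> (mu A <= \sum_(k <oo) mu (F k))%E.
Proof. exact: (qm_sub_sigma base Hmu). Qed.
Lemma mu_bigcup (F : nat -> set Pi) : (forall k, d_borel dp (F k)) -> trivIset setT F ->
  (\sum_(k <oo) mu (F k))%E = mu (\bigcup_k F k).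
Proof. exact: (qm_bigcup base Hmu). Qed.
Lemma mu_boole N (F : nat -> set Pi) : (forall k, d_borel dp (F k)) ->
  (mu (\big[setU/set0]_(i < N) F i) <= \sum_(i < N) mu (F i))%E.
Proof. exact: (qm_boole base Hmu). Qed.

Lemma borel_rect (A : forall i, set (mm_T (X i))) : (forall i, d_borel (@mm_d R (X i)) (A i)) ->
  d_borel dp [set x | forall i, A i (x i)].
Proof.
move=> hA.
rewrite (_ : [set x | _] = [set x : Pi | forall i, i \in index_enum 'I_n.+1 -> (fun x : Pi => A i (x i)) x]).
  apply: borel_bigI => i.
  apply: (@borel_preimage _ _ _ _ _ (fun x : Pi => x i) 1) => //.
    by move=> x y; rewrite mul1r; exact: dprod_ge.
apply/seteqP; split => x /=; first by move=> h i _.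
by move=> h i; apply: h; rewrite mem_index_enum.
Qed.

Lemma mu_rect (A : forall i, set (mm_T (X i))) : (forall i, d_borel (@mm_d R (X i)) (A i)) ->
  mu [set x | forall i, A i (x i)] = (\prod_(i < n.+1) @mm_m R (X i) (A i))%E.
Proof. exact: hmu.2. Qed.

Lemma lipc_borel g B : lipc g -> d_borel (@dist_R R) B -> d_borel dp (g @^-1` B).
Proof.
move=> hg; apply: (@borel_preimage _ _ _ _ _ _ n.+1%:R) => //.
by move=> x y; exact: lipc_dp.
Qed.

Definition upd (x : Pi) (k : 'I_n.+1) (t : mm_T (X k)) : Pi :=
  @eqtype.dfwith _ (fun i => mm_T (X i)) x k t.
Arguments upd x k t : clear implicits.

Lemma upd_in x k t : upd x k t k = t.
Proof. exact: dfwith_in. Qed.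
Lemma upd_out x k t j : j != k -> upd x k t j = x j.
Proof. by move=> h; apply: dfwith_out; rewrite eq_sym. Qed.
Lemma upd_upd x k s t : upd (upd x k s) k t = upd x k t.
Proof.
apply: functional_extensionality_dep => j.
case: (eqVneq j k) => [->|h]; first by rewrite !upd_in.
by rewrite !upd_out.
Qed.

Lemma slice_lip g x k : lipc g -> lip1 (@mm_d R (X k)) (fun t => g (upd x k t)).
Proof.
move=> hg t t'; have := hg k (upd x k t) (upd x k t').
rewrite !upd_in; apply => j hj; by rewrite !upd_out.
Qed.

Definition step k (g : Pi -> R) : Pi -> R := fun x => med (fun t : mm_T (X k) => g (upd x k t)).

Lemma step_upd k g x s : step k g (upd x k s) = step k g x.
Proof.
rewrite /step; congr med; apply: boolp.funext => t; by rewrite upd_upd.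
Qed.

Definition dep (Q : pred 'I_n.+1) (g : Pi -> R) :=
  forall x y : Pi, (forall j, Q j -> x j = y j) -> g x = g y.

Lemma step_dep Q k g : dep Q g -> dep (fun j => Q j && (j != k)) (step k g).
Proof.
move=> hg x y hxy; rewrite /step; congr med; apply: boolp.funext => t.
apply: hg => j hj; case: (eqVneq j k) => [->|h]; first by rewrite !upd_in.
by rewrite !upd_out // hxy // hj.
Qed.

Lemma dep_mono (Q Q' : pred 'I_n.+1) g : (forall j, Q j -> Q' j) -> dep Q g -> dep Q' g.
Proof. by move=> hQ hg x y h; apply: hg => j /hQ; exact: h. Qed.

Section StepK.
Variables (k : 'I_n.+1) (kap b : R).
Hypothesis hk : kap < 2^-1.
Hypothesis hb : (mmOD (X k) kap <= b%:E)%E.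

Lemma step_lipc g : lipc g -> lipc (step k g).
Proof.
move=> hg i x y hxy.
case: (eqVneq i k) => [eik|nik].
  have -> : step k g x = step k g y.
    rewrite /step; congr med; apply: boolp.funext => t; congr g.
    apply: functional_extensionality_dep => j; case: (eqVneq j k) => [->|h]; first by rewrite !upd_in.
    by rewrite !upd_out // hxy // eik.
  by rewrite subrr normr0; exact: md_ge0.
set hx := fun t => g (upd x k t); set hy := fun t => g (upd y k t).
have hd : forall t, `|hx t - hy t| <= mm_d (x i) (y i).
  move=> t; have := hg i (upd x k t) (upd y k t); rewrite !upd_out //; apply => j hj.
  case: (eqVneq j k) => [->|h]; first by rewrite !upd_in.
  by rewrite !upd_out // hxy.
have lx := @slice_lip g x k hg; have ly := @slice_lip g y k hg.
have [nx ux] := med_nonempty hk lx hb; have [ny uy] := med_nonempty hk ly hb.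
have h1 := med_lip lx ly hd nx uy.
have h2 : med hy <= med hx + mm_d (x i) (y i).
  by apply: med_lip => // t; rewrite distrC.
rewrite /step -/hx -/hy ler_norml; apply/andP; split; lra.
Qed.

Hypothesis hk0 : 0 <= kap.

Lemma bad_bound g e : lipc g -> 0 < e ->
  (mu [set x | (b + e < `|g x - step k g x|)%R] <= kap%:E)%E.
Proof.
move=> hg e0.
have n0 : 0 < n.+1%:R :> R by rewrite ltr0n.
set del := e / (4 * n.+1%:R).
have del0 : 0 < del by rewrite /del divr_gt0 // mulr_gt0.
have ndel : n.+1%:R * del = e / 4 by rewrite /del; field; rewrite gt_eqF.
pose ball i j := [set t : mm_T (X i) | mm_d t (mD (X i) j) < del].
pose P i j := ball i j `\` \bigcup_l [set t | (l < j)%N /\ ball i l t].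
have Pborel : forall i j, d_borel (@mm_d R (X i)) (P i j).
  move=> i j; apply: borelD; first by apply: borel_open; exact: ball_open.
  apply: borel_bigcup => l; case: (ltnP l j) => hl.
    rewrite (_ : [set t | _] = ball i l); first by apply: borel_open; exact: ball_open.
    by apply/seteqP; split => t /=; [case|split].
  rewrite (_ : [set t | _] = set0); first exact: borel0.
  by apply/seteqP; split => t //= [] //.
have Pcov : forall i t, exists j, P i j t.
  move=> i t; have [j0 hj0] := mDP t del0.
  have ex : exists j, (fun j => mm_d t (mD (X i) j) < del) j by exists j0.
  case: (ex_minnP ex) => m hm hmin; exists m; split => //= -[l _ [hl hbl]].
  by have := hmin l hbl; rewrite leqNgt hl.
have Pdisj : forall i j j' t, P i j t -> P i j' t -> j = j'.
  move=> i j j' t [hb1 hn1] [hb2 hn2]; case: (ltngtP j j') => // h.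
    by exfalso; apply: hn2; exists j.
  by exfalso; apply: hn1; exists j'.
pose AJ (J : {ffun 'I_n.+1 -> nat}) i : set (mm_T (X i)) :=
  if i == k then [set _ | J i = 0%N] else P i (J i).
pose zJ (J : {ffun 'I_n.+1 -> nat}) : Pi := fun i => mD (X i) (J i).
pose hJ (J : {ffun 'I_n.+1 -> nat}) := fun t : mm_T (X k) => g (upd (zJ J) k t).
pose Ak (J : {ffun 'I_n.+1 -> nat}) : set (mm_T (X k)) :=
  [set t | J k = 0%N /\ (b + e / 2 < `|hJ J t - med (hJ J)|)%R].
pose RJ J := [set x : Pi | forall i, AJ J i (x i)].
pose BJ J : forall i, set (mm_T (X i)) := @eqtype.dfwith _ (fun i => set (mm_T (X i))) (AJ J) k (Ak J).
pose SJ J := [set x : Pi | forall i, BJ J i (x i)].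
pose F m := if pickle_inv m is Some J then SJ J else set0.
pose G m := if pickle_inv m is Some J then RJ J else set0.
have AJborel : forall J i, d_borel (@mm_d R (X i)) (AJ J i).
  move=> J i; rewrite /AJ; case: eqP => _; last exact: Pborel.
  case: (eqVneq (J i) 0%N) => h.
    by rewrite (_ : [set _ | _] = setT); [exact: borelT|apply/seteqP; split].
  by rewrite (_ : [set _ | _] = set0); [exact: borel0|apply/seteqP; split => // t /= /eqP; rewrite (negbTE h)].
have Akborel : forall J, d_borel (@mm_d R (X k)) (Ak J).
  move=> J; case: (eqVneq (J k) 0%N) => h.
    rewrite (_ : Ak J = hJ J @^-1` [set s | b + e / 2 < `|s - med (hJ J)|]).
      apply: lip1_borel; [exact: slice_lip|exact: openR_far].
    by apply/seteqP; split => t /=; [case|split].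
  by rewrite (_ : Ak J = set0); [exact: borel0|apply/seteqP; split => // t /= [] /eqP; rewrite (negbTE h)].
have BJborel : forall J i, d_borel (@mm_d R (X i)) (BJ J i).
  move=> J i; rewrite /BJ; case: (eqVneq i k) => [->|h].
    by rewrite dfwith_in.
  by rewrite dfwith_out 1?eq_sym.
have Fborel : forall m, d_borel dp (F m).
  move=> m; rewrite /F; case: (pickle_inv m) => [J|]; last exact: borel0.
  exact: borel_rect.
have Gborel : forall m, d_borel dp (G m).
  move=> m; rewrite /G; case: (pickle_inv m) => [J|]; last exact: borel0.
  exact: borel_rect.
have mu0 : mu set0 = 0%E by case: Hmu.
have Eborel : d_borel dp [set x | (b + e < `|g x - step k g x|)%R].
  rewrite (_ : [set x | _] = (fun x => g x - step k g x) @^-1` [set s | b + e < `|s - 0|]); last first.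
    by apply/seteqP; split => x /=; rewrite subr0.
  apply: (@borel_preimage _ _ _ _ (@dist_R R) _ (2 * n.+1%:R)); first by rewrite mulr_gt0.
    move=> x y; rewrite /dist_R.
    have h1 := lipc_dp hp x y hg; have h2 := lipc_dp hp x y (step_lipc hg).
    rewrite (_ : g x - step k g x - (g y - step k g y) = (g x - g y) - (step k g x - step k g y)); last by ring.
    apply: le_trans (ler_normB _ _) _; lra.
  exact: openR_far.
have cover : [set x | (b + e < `|g x - step k g x|)%R] `<=` \bigcup_m F m.
  move=> x /= hx.
  have [jf hjf] := boolp.choice (fun i => Pcov i (x i)).
  pose J := [ffun i => if i == k then 0%N else jf i].
  exists (pickle J) => //; rewrite /F pickleK_inv => i0.
  rewrite /BJ; case: (eqVneq i0 k) => [->|h]; last first.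
    rewrite dfwith_out 1?eq_sym // /AJ (negbTE h) ffunE (negbTE h); exact: hjf.
  rewrite dfwith_in; split; first by rewrite ffunE eqxx.
  set y := upd (zJ J) k (x k).
  have bnd : forall i, mm_d (x i) (y i) <= del.
    move=> i; case: (eqVneq i k) => [->|h].
      by rewrite /y upd_in md_xx ltW.
    rewrite /y upd_out // /zJ ffunE (negbTE h); apply/ltW.
    by case: (hjf i).
  have sumb : \sum_(i < n.+1) mm_d (x i) (y i) <= e / 4.
    rewrite -ndel; apply: le_trans (ler_sum _ (fun i _ => bnd i)) _.
    by rewrite sumr_const card_ord mulr_natl.
  have gy := le_trans (lipc_sum x y hg) sumb.
  have sy := le_trans (lipc_sum x y (step_lipc hg)) sumb.
  rewrite /y step_upd in sy.
  have eq1 : g x - step k g x = (g x - g y) + (g y - step k g (zJ J)) + (step k g (zJ J) - step k g x) by ring.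
  have t1 : `|g x - step k g x| <= `|g x - g y| + `|g y - step k g (zJ J)| + `|step k g (zJ J) - step k g x|.
    rewrite eq1; apply: le_trans (ler_normD _ _) _; rewrite lerD2r; exact: ler_normD.
  rewrite distrC in sy.
  rewrite /hJ -/y; rewrite /step in t1 sy; lra.
apply: le_trans (mu_sub_sigma Eborel Fborel cover) _.
have term : forall m, (mu (F m) <= kap%:E * mu (G m))%E.
  move=> m; rewrite /F /G; case: (pickle_inv m) => [J|]; last by rewrite mu0 mule0.
  rewrite !mu_rect //.
  rewrite (bigD1 k) //= [X in (_ <= _ * X)%E](bigD1 k) //= muleA.
  rewrite /BJ dfwith_in.
  have -> : (\prod_(i < n.+1 | i != k) @mm_m R (X i) (@eqtype.dfwith _ (fun i => set (mm_T (X i))) (AJ J) k (Ak J) i) =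
      \prod_(i < n.+1 | i != k) @mm_m R (X i) (AJ J i))%E.
    by apply: eq_bigr => i hi; rewrite dfwith_out // eq_sym.
  apply: lee_wpmul2r; first by apply: prode_ge0 => i _; exact: m_ge0.
  case: (eqVneq (J k) 0%N) => hJk.
    rewrite /AJ eqxx (_ : [set _ | J k = 0%N] = setT); last by apply/seteqP; split.
    rewrite m_T mule1 (_ : Ak J = [set t | (b + e / 2 < `|hJ J t - med (hJ J)|)%R]); last first.
      by apply/seteqP; split => t /=; [case|split].
    apply: med_far => //; [exact: slice_lip|by rewrite divr_gt0].
  rewrite (_ : Ak J = set0); last by apply/seteqP; split => // t /= [] /eqP; rewrite (negbTE hJk).
  by case: (mm_prob (X k)) => -> _ _ _; apply: mule_ge0 => //; apply: m_ge0; exact: (AJborel J k).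
apply: (@le_trans _ _ (\sum_(m <oo) (kap%:E * mu (G m)))%E).
  apply: lee_nneseries; last by move=> m _; exact: term.
  by move=> m _ _; exact: mu_ge0.
rewrite nneseriesZl; last by move=> m _; exact: mu_ge0.
rewrite mu_bigcup //; last first.
  move=> a a' _ _ [x [Ga Ga']]; move: Ga Ga'; rewrite /G.
  case Ea: (pickle_inv a) => [Ja|] //; case Ea': (pickle_inv a') => [Ja'|] //.
  move=> hx hx'.
  have JJ : Ja = Ja'.
    apply/ffunP => i; case: (eqVneq i k) => [->|h].
      by have := hx k; have := hx' k; rewrite /AJ eqxx /= => -> ->.
    by have := hx' i; have := hx i; rewrite /AJ (negbTE h); exact: Pdisj.
  by have := @pickle_invK {ffun 'I_n.+1 -> nat} a; have := @pickle_invK {ffun 'I_n.+1 -> nat} a'; rewrite Ea Ea' /= JJ => -> ->.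
rewrite -[X in (_ <= X)%E]mule1; apply: lee_wpmul2l; first by rewrite lee_fin.
by apply: mu_le1; exact: borel_bigcup.
Qed.
End StepK.
End ProdM.


Lemma OD_ge0 (R : realType) (Y : mmspace R) k : (0 <= mmOD Y k)%E.
Proof.
apply: (@le_trans _ _ (PD (@dist_R R) (fun B => mm_m (m:=Y) ((fun _ => 0) @^-1` B)) (1 - k))).
  apply: le_ereal_inf_tmp => z [A _ <-].
  by apply: ereal_sup_ubound; right.
apply: ereal_sup_ubound; exists (fun _ => 0) => //.
by move=> x y; rewrite subrr normr0; exact: md_ge0.
Qed.

Section Final.
Variables (R : realType) (n : nat) (X : 'I_n.+1 -> mmspace R) (p : \bar R)
  (mu : set (forall i, mm_T (X i)) -> \bar R) (kap b : 'I_n.+1 -> R).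
Hypothesis hp : (1 <= p)%E.
Hypothesis hmu : @is_product_measure R n.+1 X p mu.
Hypothesis hk : forall i : 'I_n.+1, i != ord0 -> 0 < kap i < 2^-1.
Hypothesis hb : forall i, (mmOD (X i) (kap i) <= (b i)%:E)%E.
Notation Pi := (forall i, mm_T (X i)).
Notation dp := (dprod (fun i => @mm_d R (X i)) p).

Variable f : Pi -> R.
Hypothesis hf : lip1 dp f.

Fixpoint Gs (j : nat) : Pi -> R :=
  match j with 0 => f | j'.+1 => step (inord j'.+1) (Gs j') end.

Lemma inord_S j : (j < n)%N -> (inord j.+1 : 'I_n.+1) != ord0.
Proof. by move=> hj; apply/eqP => /(congr1 val) /=; rewrite inordK. Qed.

Lemma Gs_lipc j : (j <= n)%N -> lipc (Gs j).
Proof.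
elim: j => [_|j ih hj]; first exact: lip1_lipc hf.
have hj' : (j < n)%N by [].
have [_ hk2] := andP (hk (inord_S hj')).
exact: (step_lipc hk2 (hb _) (ih (ltnW hj'))).
Qed.

Lemma Gs_dep j : (j <= n)%N -> dep (fun i : 'I_n.+1 => (i == ord0) || (j < i)%N) (Gs j).
Proof.
elim: j => [_|j ih hj].
  move=> x y hxy; congr f; apply: functional_extensionality_dep => i; apply: hxy.
  by case: i => [[|i'] hi'] //; rewrite orbT.
apply: dep_mono (step_dep (k := inord j.+1) (ih (ltnW hj))).
move=> i /andP[/orP[/eqP ->|hi] hne]; first by rewrite eqxx.
apply/orP; right; rewrite ltn_neqAle hi andbT.
apply: contraNneq hne => h; apply/eqP; apply: val_inj; by rewrite /= inordK // -h.
Qed.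

Lemma diff_borel g g' c : lipc g -> lipc g' -> d_borel dp [set x | (c < `|g x - g' x|)%R].
Proof.
move=> hg hg'.
rewrite (_ : [set x | _] = (fun x => g x - g' x) @^-1` [set s | c < `|s - 0|]); last first.
  by apply/seteqP; split => x /=; rewrite subr0.
apply: (@borel_preimage _ _ _ _ (@dist_R R) _ (2 * n.+1%:R)); first by rewrite mulr_gt0.
  move=> x y; rewrite /dist_R.
  have h1 := lipc_dp hp x y hg; have h2 := lipc_dp hp x y hg'.
  rewrite (_ : g x - g' x - (g y - g' y) = (g x - g y) - (g' x - g' y)); last by ring.
  apply: le_trans (ler_normB _ _) _; lra.
exact: openR_far.
Qed.

Lemma PD_bound e : 0 < e ->
  (PD (@dist_R R) (fun B => mu (f @^-1` B)) (1 - \sum_(i < n.+1) kap i) <=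
   (b ord0 + e + 2 * (\sum_(j < n) (b (inord j.+1) + e) + e))%:E)%E.
Proof.
move=> e0.
have b0 : forall i, 0 <= b i.
  by move=> i; rewrite -lee_fin; apply: le_trans (hb i); exact: OD_ge0.
set h0 := fun t => Gs n (upd (base X) (k:=ord0) t).
have hl0 : lip1 (@mm_d R (X ord0)) h0 := slice_lip (base X) (Gs_lipc (leqnn n)).
have [B [hB hmB hBd]] := od_set hl0 (hb ord0) e0.
pose Ej j := [set x | (b (inord j.+1) + e < `|Gs j x - Gs j.+1 x|)%R].
pose E0 := [set x | ~ B (Gs n x)].
pose F i := if i is j.+1 then (if (j < n)%N then Ej j else set0) else E0.
have E0borel : d_borel dp E0.
  rewrite (_ : E0 = Gs n @^-1` (~` B)) //.
  have := lipc_borel hp (Gs_lipc (leqnn n)) (borelC hB). exact.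
have FB : forall i, d_borel dp (F i).
  case=> [|j] //=; case: ifP => hj; last exact: borel0.
  apply: diff_borel; [exact: Gs_lipc (ltnW hj)|exact: Gs_lipc hj].
have mE0 : (mu E0 <= (kap ord0)%:E)%E.
  pose A := @eqtype.dfwith _ (fun i => set (mm_T (X i))) (fun i => setT) ord0 (~` (h0 @^-1` B)).
  have hA : forall i, d_borel (@mm_d R (X i)) (A i).
    move=> i; rewrite /A; case: (eqVneq i ord0) => [->|h].
      by rewrite dfwith_in; exact: (borelC (lip1_borel hl0 hB)).
    by rewrite dfwith_out 1?eq_sym //; exact: borelT.
  apply: (@le_trans _ _ (mu [set x | forall i, A i (x i)])).
    apply: (mu_le hmu) => //; first exact: borel_rect.
    move=> x /= hx i; rewrite /A; case: (eqVneq i ord0) => [->|h].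
      rewrite dfwith_in /= /h0; apply: contra_not hx.
      rewrite (@Gs_dep n (leqnn n) x (upd (base X) (k:=ord0) (x ord0))) //.
      move=> j /orP[/eqP ->|]; first by rewrite upd_in.
      by rewrite ltnNge -ltnS ltn_ord.
    by rewrite dfwith_out // eq_sym.
  rewrite (mu_rect hmu) // (bigD1 ord0) //= big1 ?mule1.
    rewrite /A dfwith_in; apply: (m_compl (lip1_borel hl0 hB) (borelC (lip1_borel hl0 hB))) => //.
    by apply/seteqP; split => t //= [].
  by move=> i hi; rewrite /A dfwith_out 1?eq_sym //; exact: m_T.
have mEj : forall j, (j < n)%N -> (mu (Ej j) <= (kap (inord j.+1))%:E)%E.
  move=> j hj; have /andP[hk1 hk2] := hk (inord_S hj).
  exact: (bad_bound hp hmu hk2 (hb _) (ltW hk1) (Gs_lipc (ltnW hj)) e0).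
set Bad := \big[setU/set0]_(i < n.+1) F i.
have Badborel : d_borel dp Bad.
  have bigU : forall N, d_borel dp (\big[setU/set0]_(i < N) F i).
    elim => [|N ih]; first by rewrite big_ord0; exact: borel0.
    by rewrite big_ord_recr /=; exact: borelU.
  exact: bigU.
have liftS : forall j : 'I_n, lift ord0 j = inord j.+1 :> 'I_n.+1.
  by move=> j; apply: ord_inj; rewrite /= inordK // ltnS ltn_ord.
have mBad : (mu Bad <= (\sum_(i < n.+1) kap i)%:E)%E.
  apply: le_trans (mu_boole hmu n.+1 FB) _.
  rewrite big_ord_recl [X in (_ <= X%:E)%E]big_ord_recl EFinD.
  apply: leeD; first exact: mE0.
  rewrite -sumEFin; apply: lee_sum => j _ /=; rewrite add0n ltn_ord liftS; exact: mEj.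
set C := \sum_(j < n) (b (inord j.+1) + e).
have C0 : 0 <= C by apply: sumr_ge0 => j _; have := b0 (inord j.+1); lra.
pose B' := [set s | exists2 u, B u & `|s - u| < C + e].
have B'borel : d_borel (@dist_R R) B' by exact: openR_nbhd.
have cov : f @^-1` B' `|` Bad = setT.
  apply/seteqP; split => // x _ /=.
  case: (pselect (Bad x)) => hBad; [by right|left].
  have nF : forall i, (i < n.+1)%N -> ~ F i x.
    by move=> i hi hFi; apply: hBad; exact: (bigsetU_sup hi).
  have hx0 : B (Gs n x) by apply: contrapT => h; exact: (nF 0%N).
  have hxj : forall j : 'I_n, `|Gs j x - Gs j.+1 x| <= b (inord j.+1) + e.
    move=> j; have := nF j.+1 (ltn_ord (lift ord0 j)); rewrite /F /= ltn_ord /Ej /=.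
    by rewrite leNgt => h; apply/negP.
  exists (Gs n x) => //.
  have tel : f x - Gs n x = \sum_(j < n) (Gs j x - Gs j.+1 x).
    rewrite -(big_mkord xpredT (fun j => Gs j x - Gs j.+1 x)).
    rewrite (@telescope_sumr_eq _ 0 n (fun j => - Gs j x) (fun j => Gs j x - Gs j.+1 x)) //=; first by rewrite opprK addrC.
    by move=> k _; rewrite opprK addrC.
  rewrite tel; apply: le_lt_trans (ler_norm_sum _ _ _) _.
  apply: le_lt_trans (ler_sum _ (fun j _ => hxj j)) _; rewrite -/C; lra.
have mB' : ((1 - \sum_(i < n.+1) kap i)%:E <= mu (f @^-1` B'))%E.
  have hfB : d_borel dp (f @^-1` B') by have := lipc_borel hp (lip1_lipc hp hf) B'borel.
  have h1 := mu_U2 hmu hfB Badborel; rewrite cov (mu_T hmu) in h1.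
  have := mu_ge0 hmu hfB; have := mu_le1 hmu hfB.
  have := mu_ge0 hmu Badborel; move: mBad h1.
  case: (mu (f @^-1` B')) => [a| |] //; case: (mu Bad) => [c| |] //=.
  rewrite !lee_fin => h2 h3 h4 h5 h6; have : 1 <= a + c by rewrite -lee_fin.
  lra.
apply: le_trans (ereal_inf_lbound _) _.
  by exists B'.
apply: ge_ereal_sup => z [[s [u Bu hsu] [s' [u' Bu' hsu'] <-]]|->]; last first.
  by rewrite lee_fin; have := b0 ord0; lra.
rewrite lee_fin /dist_R.
have := hBd _ _ Bu Bu'.
have t1 : `|s - s'| <= `|s - u| + `|u - u'| + `|u' - s'|.
  rewrite (_ : s - s' = (s - u) + (u - u') + (u' - s')); last by ring.
  apply: le_trans (ler_normD _ _) _; rewrite lerD2r; exact: ler_normD.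
rewrite (distrC u' s') in t1; lra.
Qed.
End Final.


Unset Implicit Arguments. Set Strict Implicit. Set Printing Implicit Defensive.

Theorem mainTheorem10 (R : realType) (p : \bar R) (n : nat)
    (X : 'I_n.+1 -> mmspace R)
    (mu : set (forall i, mm_T (X i)) -> \bar R)
    (kappa : 'I_n.+1 -> R) :
  (1 <= p)%E ->
  @is_product_measure R n.+1 X p mu ->
  0 < kappa ord0 < 1 ->
  (forall i : 'I_n.+1, i != ord0 -> 0 < kappa i < 2^-1) ->
  (OD (dprod (fun i => @mm_d R (X i)) p) mu (\sum_(i < n.+1) kappa i)
    <= mmOD (X ord0) (kappa ord0)
       + 2%:E * \sum_(i < n.+1 | i != ord0) mmOD (X i) (kappa i))%E.
Proof.
move=> hp hmu hk0 hk.
set a := fun i => mmOD (X i) (kappa i).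
change (OD (dprod (fun i => @mm_d R (X i)) p) mu (\sum_(i < n.+1) kappa i) <= a ord0 + 2%:E * \sum_(i < n.+1 | i != ord0) a i)%E.
have a0 : forall i, (0 <= a i)%E by move=> i; exact: OD_ge0.
have S0 : (0 <= \sum_(i < n.+1 | i != ord0) a i)%E by apply: sume_ge0 => i _.
case: (pselect (forall i, (a i < +oo)%E)) => [afin|]; last first.
  move=> /existsNP [i /negP]; rewrite -leNgt leye_eq => /eqP ai.
  apply: le_trans (leey _) _.
  case: (eqVneq i ord0) => [i0|hi].
    rewrite -ai i0; apply: leeDl; exact: mule_ge0.
  apply: (@le_trans _ _ (2%:E * \sum_(i < n.+1 | i != ord0) a i)%E); last exact: leeDr.
  apply: (@le_trans _ _ (\sum_(i < n.+1 | i != ord0) a i)%E); last first.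
    rewrite -{1}(mul1e (\sum_(i < n.+1 | i != ord0) a i)%E).
    by apply: lee_wpmul2r => //; rewrite lee_fin ler1n.
  rewrite (bigD1 i) //= -ai; apply: leeDl; apply: sume_ge0 => j _; exact: a0.
pose b i := fine (a i).
have ab : forall i, a i = (b i)%:E.
  by move=> i; rewrite /b fineK //; rewrite ge0_fin_numE //; exact: afin.
have hb : forall i, (mmOD (X i) (kappa i) <= (b i)%:E)%E by move=> i; rewrite -ab.
have hS : \sum_(i < n.+1 | i != ord0) b i = \sum_(j < n) b (inord j.+1).
  rewrite big_mkcond big_ord_recl eqxx /=; apply: etrans (add0r _) _; apply: eq_bigr => j _.
  congr b; apply: ord_inj; by rewrite /= inordK // ltnS ltn_ord.
have -> : (a ord0 + 2%:E * \sum_(i < n.+1 | i != ord0) a i =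
    (b ord0 + 2 * \sum_(j < n) b (inord j.+1))%:E)%E.
  rewrite -hS ab [RHS]EFinD [in RHS]EFinM -sumEFin; congr (_ + _ * _)%E.
  by apply: eq_bigr => i _; rewrite ab.
apply: ge_ereal_sup => z [f hf <-].
apply/lee_addgt0Pr => eps eps0.
have K0 : 0 < 2 * n%:R + 3 :> R.
  apply: (@lt_le_trans _ _ 3); rewrite ?ltr0n // -subr_ge0 addrK mulr_ge0 // ler0n.
set e := eps / (2 * n%:R + 3).
have e0 : 0 < e by rewrite divr_gt0.
have hk' : forall i : 'I_n.+1, i != ord0 -> 0 < kappa i < 2^-1 by [].
apply: le_trans (PD_bound hp hmu hk' hb hf e0) _.
rewrite -EFinD lee_fin big_split /= sumr_const card_ord.
have -> : eps = (2 * n%:R + 3) * e by rewrite /e mulrC divfK // gt_eqF.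
rewrite -mulr_natl; lra.
Qed.
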